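(* Let $V$ be a real vector space of dimension $2n$ and $F=(0=V_0\subset V_1\subset\dots\subset V_{2n}=V)$ a full flag with $\dim V_j=j$. Let $\Omega(F)$ be the space of symplectic forms $\omega$ on $V$ such that $V_j$ is $\omega$-isotropic for $j\le n$, $V_j$ is $\omega$-coisotropic for $j\ge n$, and $V_j^{\perp_\omega}=V_{2n-j}$ for $j\le n$. For $\omega\in\Omega(F)$ and $0\le j\le n-1$, $\omega$ induces a symplectic form on the quotient $V_{2n-j}/V_j$, hence an orientation of it. Then the map sending $\omega$ to this $n$-tuple of orientations induces a bijection between the set of connected components of $\Omega(F)$ and the set of all $n$-tuples of orientations of the spaces $V_{2n-j}/V_j$, $j=0,\dots,n-1$ (every tuple occurs), and each connected component of $\Omega(F)$ is convex. *)

(* Defs.v *)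
From HB Require Import structures.
From mathcomp Require Import all_boot all_order all_fingroup all_algebra.
From mathcomp Require Import all_classical all_reals all_analysis.
Set Implicit Arguments. Unset Strict Implicit. Unset Printing Implicit Defensive.
Import Order.TTheory GRing.Theory Num.Theory.
Local Open Scope ring_scope.
Local Open Scope classical_set_scope.

(* V = 'rV[R]_m (here m = 2n).  A bilinear form on V is given by its matrix W:
   omega(x, y) = x *m W *m y^T. *)

Definition rowN (R : pzRingType) (m : nat) (B : 'M[R]_m) (k : nat) : 'rV[R]_m :=
  oapp (fun i : 'I_m => row i B) 0 (insub k).

(* The full flag determined by an invertible matrix B :
   V_j = span of the first j rows of B (every full flag arises this way).
   flagsp B j is a square matrix whose row space is V_j. *)
Definition flagsp (R : pzRingType) (m : nat) (B : 'M[R]_m) (j : nat) : 'M[R]_m :=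
  \matrix_(i, k) (if (i < j)%N then B i k else 0).

(* omega-orthogonal of the row space of A : {x | x *m W *m a^T = 0 for all rows a of A} *)
Definition perpmx (R : fieldType) (m : nat) (W A : 'M[R]_m) : 'M[R]_m :=
  kermx (W *m A^T).

Definition symplectic (R : fieldType) (m : nat) (W : 'M[R]_m) : Prop :=
  W^T = - W /\ W \in unitmx.

Definition Omega (R : fieldType) (n : nat) (B : 'M[R]_(2 * n)) : set 'M[R]_(2 * n) :=
  [set W | symplectic W
     /\ (forall j, (j <= n)%N -> flagsp B j *m W *m (flagsp B j)^T = 0)
     /\ (forall j, (n <= j <= 2 * n)%N -> (perpmx W (flagsp B j) <= flagsp B j)%MS)
     /\ (forall j, (j <= n)%N -> (perpmx W (flagsp B j) == flagsp B (2 * n - j))%MS)].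

(* Evaluation of the top wedge power omega^(m/2) (up to a positive constant)
   on a family of m vectors, given the Gram values w a b = omega(v_a, v_b):
   sum_{s in S_m} sgn(s) prod_{i < m/2} w (s(2i)) (s(2i+1)). *)
Definition permN (m : nat) (s : 'S_m) (x : nat) : nat :=
  oapp (fun i : 'I_m => val (s i)) 0 (insub x).

Definition wedge_top (R : pzRingType) (m : nat) (w : nat -> nat -> R) : R :=
  \sum_(s : 'S_m) (-1) ^+ s * \prod_(i < m./2) w (permN s (2 * i)) (permN s (2 * i + 1)).

(* Orientation of V_{2n-j}/V_j induced by omega, encoded relative to the
   reference basis (images of rows j, ..., 2n-j-1 of B): true = positive,
   i.e. the volume form omega^(n-j) of the induced symplectic form is
   positive on the reference basis. *)
Definition induced_orientation (R : realFieldType) (n : nat) (B W : 'M[R]_(2 * n))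
    (j : nat) : bool :=
  0 < wedge_top (2 * (n - j))
        (fun a b => (rowN B (j + a) *m W *m (rowN B (j + b))^T) 0 0).

(* Main.v *)
Require Import Defs.
From HB Require Import structures.
From mathcomp Require Import all_boot all_order all_fingroup all_algebra.
From mathcomp Require Import all_classical all_reals all_analysis.
From mathcomp Require Import zify lra.
Set Implicit Arguments. Unset Strict Implicit. Unset Printing Implicit Defensive.
Import Order.TTheory GRing.Theory Num.Theory.
Local Open Scope ring_scope.
Import numFieldNormedType.Exports.
Local Open Scope classical_set_scope.

Local Close Scope classical_set_scope.

Lemma permN_ord m (s : 'S_m) (x : 'I_m) : permN s x = s x.
Proof. rewrite /permN; case: insubP => [y _ /val_inj -> //|]; by rewrite ltn_ord. Qed.

Lemma tperm_map (T1 T2 : finType) (f : T1 -> T2) (finj : injective f) a b i :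
  tperm (f a) (f b) (f i) = f (tperm a b i).
Proof.
case: (tpermP a b i) => [->|->|/eqP ia /eqP ib]; rewrite ?tpermL ?tpermR //.
by rewrite tpermD // (inj_eq finj) eq_sym.
Qed.

Section Wedge.
Variable k : nat.
Local Notation m := (2 * k)%N.

Lemma pe_proof (i : 'I_k) : (2 * i < m)%N. Proof. have := ltn_ord i; lia. Qed.
Lemma po_proof (i : 'I_k) : (2 * i + 1 < m)%N. Proof. have := ltn_ord i; lia. Qed.
Definition pe (i : 'I_k) : 'I_m := Ordinal (pe_proof i).
Definition po (i : 'I_k) : 'I_m := Ordinal (po_proof i).
Lemma h_proof (x : 'I_m) : (x./2 < k)%N. Proof. have := ltn_ord x; lia. Qed.
Definition h (x : 'I_m) : 'I_k := Ordinal (h_proof x).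

Lemma h_pe i : h (pe i) = i. Proof. apply: val_inj => /=; lia. Qed.
Lemma h_po i : h (po i) = i. Proof. apply: val_inj => /=; lia. Qed.
Lemma odd_pe i : odd (pe i) = false. Proof. rewrite /=; lia. Qed.
Lemma odd_po i : odd (po i) = true. Proof. rewrite /=; lia. Qed.
Lemma pe_inj : injective pe. Proof. move=> i j /(congr1 val) /= e; apply: val_inj => /=; lia. Qed.
Lemma po_inj : injective po. Proof. move=> i j /(congr1 val) /= e; apply: val_inj => /=; lia. Qed.
Lemma pe_po i j : pe i != po j. Proof. apply/eqP => /(congr1 val) /=; lia. Qed.
Lemma decomp (x : 'I_m) : x = if odd x then po (h x) else pe (h x).
Proof. by apply: val_inj; case: ifP => /= H; lia. Qed.

Lemma decompP (P : 'I_m -> Prop) : (forall i, P (pe i)) -> (forall i, P (po i)) -> forall x, P x.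
Proof. by move=> Pe Po x; rewrite (decomp x); case: ifP. Qed.

Definition betaf (r : 'S_k) (x : 'I_m) : 'I_m :=
  if odd x then po (r (h x)) else pe (r (h x)).
Lemma betaf_inj r : injective (betaf r).
Proof.
apply: decompP => i; apply: decompP => j;
  rewrite /betaf ?odd_pe ?odd_po ?h_pe ?h_po.
- by move/pe_inj/perm_inj ->.
- by move=> /eqP; rewrite (negbTE (pe_po _ _)).
- by move=> /eqP; rewrite eq_sym (negbTE (pe_po _ _)).
- by move/po_inj/perm_inj ->.
Qed.
Definition beta r : 'S_m := perm (@betaf_inj r).
Lemma beta_pe r i : beta r (pe i) = pe (r i).
Proof. by rewrite permE /betaf odd_pe h_pe. Qed.
Lemma beta_po r i : beta r (po i) = po (r i).
Proof. by rewrite permE /betaf odd_po h_po. Qed.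
Lemma betaM r1 r2 : beta (r1 * r2)%g = (beta r1 * beta r2)%g.
Proof.
by apply/permP; apply: decompP => i; rewrite permM ?beta_pe ?beta_po permM.
Qed.
Lemma beta1 : beta 1%g = 1%g.
Proof. by apply/permP; apply: decompP => i; rewrite perm1 ?beta_pe ?beta_po perm1. Qed.
Lemma beta_tperm a b : beta (tperm a b) = (tperm (pe a) (pe b) * tperm (po a) (po b))%g.
Proof.
apply/permP; apply: decompP => i; rewrite permM ?beta_pe ?beta_po.
  rewrite (tperm_map pe_inj) [RHS]tpermD //; by rewrite eq_sym pe_po.
rewrite [tperm (pe a) _ _]tpermD ?pe_po // (tperm_map po_inj) //.
Qed.
Lemma beta_even r : odd_perm (beta r) = false.
Proof.
case: (prod_tpermP r) => ts -> _; elim: ts => [|[a b] ts IH].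
  by rewrite big_nil beta1 odd_perm1.
rewrite big_cons betaM odd_permM IH beta_tperm odd_permM !odd_tperm /=.
by rewrite (inj_eq pe_inj) (inj_eq po_inj) addbb.
Qed.

Lemma s0_proof (x : 'I_m) : ((if odd x then m.-1 - x./2 else x./2) < m)%N.
Proof. have := ltn_ord x; case: ifP; lia. Qed.
Definition s0f (x : 'I_m) : 'I_m := Ordinal (s0_proof x).
Lemma s0f_inj : injective s0f.
Proof. move=> x y /(congr1 val) /= H; have := ltn_ord x; have := ltn_ord y.
move=> ? ?; apply: val_inj; move: H; case: ifP => ?; case: ifP => ? /= ?; lia. Qed.
Definition s0 : 'S_m := perm s0f_inj.
Lemma s0_pe i : val (s0 (pe i)) = i. Proof. rewrite permE /=; have -> : odd (2 * i) = false by lia. lia. Qed.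
Lemma s0_po i : val (s0 (po i)) = (m.-1 - i)%N. Proof. rewrite permE /=; have -> : odd (2 * i + 1) = true by lia. lia. Qed.

Definition anti (s : 'S_m) := [forall i : 'I_k, (s (pe i) + s (po i) == m.-1)%N].

Lemma sum_pairs (f : nat -> nat) n :
  (\sum_(0 <= x < 2 * n) f x = \sum_(0 <= i < n) (f (2*i) + f (2*i+1)))%N.
Proof.
elim: n => [|n IH]; first by rewrite !big_geq.
have -> : (2 * n.+1 = (2*n).+1.+1)%N by lia.
by rewrite !big_nat_recr //= IH addnA addn1.
Qed.

Lemma sum_perm (s : 'S_m) : (\sum_(i < k) (s (pe i) + s (po i)) = k * m.-1)%N.
Proof.
have E1 : (\sum_(x < m) s x = \sum_(x < m) x)%N.
  by rewrite [RHS](reindex_inj (@perm_inj _ s)).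
have E2 : (\sum_(x < m) x = k * m.-1)%N.
  rewrite -(big_mkord xpredT (fun x => x)) bin2_sum bin2 -mulnA.
  by rewrite [X in X./2]mul2n doubleK.
have E3 : (\sum_(x < m) s x = \sum_(i < k) (s (pe i) + s (po i)))%N.
  rewrite (eq_bigr (fun x : 'I_m => permN s x)); last by move=> x _; rewrite permN_ord.
  rewrite -(big_mkord xpredT (permN s)) sum_pairs big_mkord.
  by apply: eq_bigr => i _; rewrite -(permN_ord s (pe i)) -(permN_ord s (po i)).
by rewrite -E3 E1 E2.
Qed.

Variable R : comPzRingType.
Variable w : nat -> nat -> R.
Hypothesis H1 : forall a b, (a < m)%N -> (b < m)%N -> (a + b < m.-1)%N -> w a b = 0.
Hypothesis H2 : forall a b, (a < m)%N -> (b < m)%N -> w a b = - w b a.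

Definition term (s : 'S_m) := (-1) ^+ s * \prod_(i < k) w (s (pe i)) (s (po i)).

Lemma wedgeE : wedge_top m w = \sum_(s : 'S_m) term s.
Proof.
rewrite /wedge_top; apply: eq_bigr => s _; rewrite /term; congr (_ * _).
have hk : (m./2 = k)%N by lia.
rewrite -(big_mkord xpredT (fun i => w (permN s (2 * i)) (permN s (2 * i + 1)))) hk.
rewrite big_mkord; apply: eq_bigr => i _.
by rewrite -(permN_ord s (pe i)) -(permN_ord s (po i)).
Qed.

Lemma nonanti_term s : ~~ anti s -> term s = 0.
Proof.
move=> na.
case: (boolP [exists i : 'I_k, (s (pe i) + s (po i) < m.-1)%N]) => [/existsP [i Hi]|].
  by rewrite /term (bigD1 i) //= (H1 (ltn_ord _) (ltn_ord _) Hi) mul0r mulr0.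
move=> /existsPn Hge; exfalso; move: na => /negP; apply.
have Hle : forall i : 'I_k, (m.-1 <= s (pe i) + s (po i))%N by move=> i; rewrite leqNgt Hge.
have := leqif_sum (fun i (_ : true) => leqif_eq (Hle i)).
case=> _; rewrite sum_perm sum_nat_const.
rewrite (eq_card (B := 'I_k)) // card_ord.
rewrite eqxx => /esym/forallP Hall.
by apply/forallP => i; rewrite eq_sym; apply: (implyP (Hall i)).
Qed.

Definition tp (i : 'I_k) : 'S_m := tperm (pe i) (po i).

Lemma tp_pe i j : j != i -> tp i (pe j) = pe j.
Proof. move=> ji; rewrite tpermD //; first by rewrite (inj_eq pe_inj) eq_sym. by rewrite eq_sym pe_po. Qed.
Lemma tp_po i j : j != i -> tp i (po j) = po j.
Proof. by move=> ji; rewrite tpermD ?pe_po // (inj_eq po_inj) eq_sym. Qed.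

Lemma flip_term i s : term (tp i * s)%g = term s.
Proof.
rewrite /term odd_mul_tperm pe_po signr_addb.
rewrite (bigD1 i) // [in RHS](bigD1 i) //.
rewrite /= !permM /tp tpermL tpermR.
have -> : w (s (po i)) (s (pe i)) = - w (s (pe i)) (s (po i)) by apply: H2.
rewrite (eq_bigr (fun j => w (s (pe j)) (s (po j)))); last first.
  by move=> j ji; rewrite !permM tp_pe // tp_po.
by rewrite expr1 mulN1r mulNr mulNr mulrN opprK.
Qed.

Lemma flip_anti i s : anti s -> anti (tp i * s)%g.
Proof.
move=> /forallP a; apply/forallP => j; rewrite !permM.
have [->|ji] := eqVneq j i; first by rewrite /tp tpermL tpermR addnC.
by rewrite tp_pe // tp_po.
Qed.

Definition bad (s : 'S_m) := [set i : 'I_k | (s (po i) < s (pe i))%N].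

Lemma flip_bad i s : i \in bad s -> bad (tp i * s)%g \subset bad s :\ i.
Proof.
rewrite inE => bi; apply/fintype.subsetP => j; rewrite !inE !permM.
have [->|ji] := eqVneq j i; first by rewrite /tp tpermL tpermR ltnNge ltnW.
by rewrite tp_pe // tp_po.
Qed.

Lemma canon_term s : anti s -> bad s = finset.set0 -> term s = term s0.
Proof.
move=> /forallP a b0.
have lt i : (s (pe i) < k)%N.
  have := eqP (a i); have : i \notin bad s by rewrite b0 inE.
  by rewrite inE -leqNgt; have := ltn_ord i; lia.
pose rf i := Ordinal (lt i).
have rinj : injective rf.
  by move=> i j /(congr1 val) /= /val_inj /perm_inj /pe_inj.
pose r := perm rinj.
have rE i : val (r i) = s (pe i) by rewrite permE.
have sE : s = (beta r * s0)%g.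
  apply/permP; apply: decompP => i; rewrite permM ?beta_pe ?beta_po; apply: val_inj.
    by rewrite s0_pe rE.
  by rewrite s0_po rE; have := eqP (a i); move=> e; rewrite -e addKn.
rewrite /term {1}sE odd_permM beta_even /=.
congr (_ * _).
rewrite [RHS](reindex_inj (@perm_inj _ r)); apply: eq_bigr => i _.
by rewrite s0_pe s0_po rE; have := eqP (a i); move=> e; congr w; lia.
Qed.

Lemma anti_term s : anti s -> term s = term s0.
Proof.
move: {2}#|bad s|.+1 (ltnSn #|bad s|) => N; elim: N s => // N IH s lt as_.
have [b0|] := eqVneq (bad s) finset.set0; first exact: canon_term.
case/set0Pn => i bi; rewrite -(flip_term i); apply: IH; last exact: flip_anti.
have := subset_leq_card (flip_bad bi); rewrite (cardsD1 i (bad s)) bi in lt.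
lia.
Qed.

Lemma s0_anti : anti s0.
Proof. by apply/forallP => i; rewrite s0_pe s0_po; apply/eqP; have := ltn_ord i; lia. Qed.

Lemma wedge_val : wedge_top m w =
  ((-1) ^+ s0 * \prod_(i < k) w i (m.-1 - i)%N) *+ #|[pred s | anti s]|.
Proof.
rewrite wedgeE (bigID anti) /= [X in _ + X]big1 ?addr0; last by move=> s /nonanti_term.
rewrite (eq_bigr (fun _ => term s0)); last by move=> s /anti_term.
rewrite sumr_const /term; congr (_ * _ *+ _).
by apply: eq_bigr => i _; rewrite s0_pe s0_po.
Qed.

End Wedge.

Definition wN k := #|[pred s : 'S_(2 * k) | @anti k s]|.
Definition we (R : pzRingType) k : R := (-1) ^+ (s0 k).

Lemma wN_gt0 k : (0 < wN k)%N.
Proof. by apply/card_gt0P; exists (s0 k); exact: s0_anti. Qed.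

Lemma we_pm (R : pzRingType) k : we R k = 1 \/ we R k = -1.
Proof. by rewrite /we; case: odd_perm; [right|left]. Qed.

Lemma wedge_eq (R : comPzRingType) k (w : nat -> nat -> R) :
  (forall a b, (a < 2 * k)%N -> (b < 2 * k)%N -> (a + b < (2 * k).-1)%N -> w a b = 0) ->
  (forall a b, (a < 2 * k)%N -> (b < 2 * k)%N -> w a b = - w b a) ->
  wedge_top (2 * k) w = (we R k * \prod_(i < k) w i ((2 * k).-1 - i)%N) *+ wN k.
Proof. by move=> H1 H2; rewrite wedge_val // mulrA. Qed.

Local Open Scope classical_set_scope.

Lemma flagE (R : pzRingType) m (X : 'M[R]_m) j : flagsp X j = pid_mx j *m X.
Proof.
apply/matrixP => i l; rewrite !mxE (bigD1 i) //= big1 ?addr0.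
  by rewrite !mxE eqxx /=; case: ifP => _; rewrite ?mul1r ?mul0r.
move=> t ti; rewrite mxE; case: eqP => [e|_]; last by rewrite mul0r.
by move: ti; rewrite -(inj_eq val_inj) /= e eqxx.
Qed.

Lemma pidl (R : pzRingType) m (X : 'M[R]_m) p a b :
  (pid_mx p *m X) a b = if (a < p)%N then X a b else 0.
Proof. by rewrite -flagE mxE. Qed.

Lemma pidr (R : comPzRingType) m (Y : 'M[R]_m) q a b :
  (Y *m pid_mx q) a b = if (b < q)%N then Y a b else 0.
Proof. by rewrite -[Y *m _]trmxK trmx_mul tr_pid_mx mxE pidl mxE. Qed.

Definition pm1 (R : numDomainType) (x : R) := x = 1 \/ x = -1.

Lemma pm1_sg (R : realDomainType) (x : R) : x != 0 -> pm1 (Num.sg x).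
Proof.
move=> x0; case: (ltgtP x 0) => [xl|xg|xe]; first by right; rewrite ltr0_sg.
  by left; rewrite gtr0_sg.
by rewrite xe eqxx in x0.
Qed.

Lemma pm1M (R : numDomainType) (x y : R) : pm1 x -> pm1 y -> pm1 (x * y).
Proof.
by case=> ->; case=> ->; rewrite ?mul1r ?mulN1r ?opprK; [left|right|right|left].
Qed.

Lemma pm1_prod (R : numDomainType) (I : finType) (P : pred I) (F : I -> R) :
  (forall i, P i -> pm1 (F i)) -> pm1 (\prod_(i | P i) F i).
Proof.
move=> h; apply: (big_ind (fun x => pm1 x)); [by left|exact: pm1M|exact: h].
Qed.

Lemma pm1_sq (R : numDomainType) (x : R) : pm1 x -> x * x = 1.
Proof. by case=> ->; rewrite ?mul1r ?mulrNN ?mulr1. Qed.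

Lemma pm1_neq0 (R : numDomainType) (x : R) : pm1 x -> x != 0.
Proof. by case=> ->; rewrite ?oppr_eq0 oner_eq0. Qed.

Lemma pm1_pos (R : numDomainType) (x y : R) : pm1 x -> pm1 y -> (0 < x) = (0 < y) -> x = y.
Proof.
have h : (0 < (-1 : R)) = false by rewrite oppr_gt0 ltr10.
by case=> ->; case=> -> //; rewrite h ltr01.
Qed.

Section LA.
Variables (R : realType) (n : nat) (B : 'M[R]_(2 * n)).
Hypothesis hB : B \in unitmx.
Local Notation M := (2 * n)%N.

Definition G (W : 'M[R]_M) := B *m W *m B^T.
Definition g (W : 'M[R]_M) (a b : nat) : R := (rowN B a *m W *m (rowN B b)^T) 0 0.
Definition Pat W := forall a b, (a < M)%N -> (b < M)%N -> (a + b < M.-1)%N -> g W a b = 0.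
Definition cN W a := g W a (M.-1 - a)%N.

Lemma rowN_ord (x : 'I_M) : rowN B x = row x B.
Proof. rewrite /rowN; case: insubP => [y _ /val_inj -> //|]; by rewrite ltn_ord. Qed.

Lemma gG W (x y : 'I_M) : g W x y = G W x y.
Proof.
rewrite /g !rowN_ord /G -row_mul !mxE; apply: eq_bigr => l _; by rewrite !mxE.
Qed.

Lemma G_tr W : (G W)^T = G W^T.
Proof. by rewrite /G !trmx_mul trmxK mulmxA. Qed.

Lemma g_skew W : W^T = -W -> forall a b, (a < M)%N -> (b < M)%N -> g W a b = - g W b a.
Proof.
move=> hs a b ha hb; rewrite (gG W (Ordinal ha) (Ordinal hb)) (gG W (Ordinal hb) (Ordinal ha)).
have := congr1 (fun X : 'M[R]_M => X (Ordinal hb) (Ordinal ha)) (G_tr W).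
by rewrite mxE hs /G mulmxN mulNmx mxE => ->; rewrite mxE.
Qed.

Lemma g_lin W1 W2 s t a b : g (s *: W1 + t *: W2) a b = s * g W1 a b + t * g W2 a b.
Proof.
by rewrite /g mulmxDr mulmxDl -!scalemxAr -!scalemxAl !mxE.
Qed.

Lemma zero_of_sub W p q : (flagsp B p <= perpmx W (flagsp B q))%MS ->
  forall a b : 'I_M, (a < p)%N -> (b < q)%N -> G W a b = 0.
Proof.
rewrite /perpmx sub_kermx !flagE trmx_mul tr_pid_mx !mulmxA => /eqP H a b ap bq.
have := congr1 (fun X : 'M[R]_M => X a b) H.
by rewrite pidr bq -!mulmxA pidl ap !mulmxA => ->; rewrite mxE.
Qed.

Lemma sub_of_zero W p q : Pat W -> (p + q <= M)%N ->
  (flagsp B p <= perpmx W (flagsp B q))%MS.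
Proof.
move=> hP pq; rewrite /perpmx sub_kermx !flagE trmx_mul tr_pid_mx !mulmxA.
apply/eqP/matrixP => a b; rewrite [RHS]mxE pidr -!mulmxA pidl !mulmxA -/(G W).
case: ifP => // bq; case: ifP => // ap; rewrite -gG hP //; lia.
Qed.

Lemma rank_flag p : (p <= M)%N -> \rank (flagsp B p) = p.
Proof.
by move=> pM; rewrite flagE mxrankMfree ?row_free_unit // rank_pid_mx.
Qed.

Lemma rank_perp W q : W \in unitmx -> (q <= M)%N -> \rank (perpmx W (flagsp B q)) = (M - q)%N.
Proof.
move=> hW qM; rewrite /perpmx mxrank_ker -mxrank_tr trmx_mul trmxK flagE -mulmxA.
by rewrite mxrankMfree ?rank_pid_mx // row_free_unit unitmx_mul unitmx_tr hB hW.
Qed.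

Lemma perp_eq W q : W \in unitmx -> Pat W -> (q <= M)%N ->
  (perpmx W (flagsp B q) == flagsp B (M - q))%MS.
Proof.
move=> hW hP qM.
have Hs : (flagsp B (M - q) <= perpmx W (flagsp B q))%MS by apply: sub_of_zero => //; lia.
have := (mxrank_leqif_eq Hs).2; rewrite rank_flag ?leq_subr // rank_perp // eqxx.
by move=> /esym /andP [-> ->].
Qed.


Lemma unit_iff W : W^T = -W -> Pat W -> (W \in unitmx) = [forall i : 'I_n, cN W i != 0].
Proof.
move=> hs hP.
have -> : (W \in unitmx) = (G W \in unitmx) by rewrite /G !unitmx_mul unitmx_tr hB /= andbT.
rewrite unitmxE unitfE.
pose rr := perm (@rev_ord_inj M).
have hdet : \det (col_perm rr (G W)) = \det (G W) * (-1) ^+ (rr^-1)%g.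
  by rewrite col_permE det_mulmx det_perm.
have htrig : is_trig_mx (col_perm rr (G W)).
  apply/is_trig_mxP => i j ij; rewrite mxE permE -gG.
  apply: hP; [exact: ltn_ord|exact: ltn_ord|]; rewrite /=; have := ltn_ord j; lia.
have -> : (\det (G W) != 0) = (\det (col_perm rr (G W)) != 0).
  by rewrite hdet mulf_eq0 signr_eq0 orbF.
rewrite (det_trig htrig); apply/idP/forallP.
- move=> H i; have hi : (i < M)%N by have := ltn_ord i; lia.
  apply: contraNneq H => c0; apply/prodf_eq0; exists (Ordinal hi) => //.
  move: c0; rewrite mxE permE -gG /cN /= (_ : (M - i.+1 = M.-1 - i)%N) => [->//|]; lia.
- move=> H; apply/negP => /prodf_eq0 [x _]; rewrite mxE permE -gG /=.
  case: (ltnP x n) => xn.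
    have := H (Ordinal xn); rewrite /cN /= (_ : (M - x.+1 = M.-1 - x)%N); last by lia.
    by move/negbTE ->.
  have yn : (M - x.+1 < n)%N by have := ltn_ord x; lia.
  have := H (Ordinal yn); rewrite /cN /= => hy.
  rewrite g_skew //; last by have := ltn_ord x; lia.
  have e : (M.-1 - (M - x.+1) = x)%N by have := ltn_ord x; lia.
  by rewrite e in hy; rewrite oppr_eq0 (negbTE hy).
Qed.

Lemma OmegaE W : Omega B W <-> [/\ W^T = -W, Pat W & forall i : 'I_n, cN W i != 0].
Proof.
split.
  case=> [[hs hu] [_ [_ hperp]]].
  have hP : Pat W.
    move=> a b ha hb hab; case: (ltnP b n) => bn.
      have /andP [_ Hs] := hperp b.+1 bn.
      by have := @zero_of_sub W _ _ Hs (Ordinal ha) (Ordinal hb); rewrite -gG /= => -> //; lia.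
    have an : (a.+1 <= n)%N by lia.
    have /andP [_ Hs] := hperp a.+1 an.
    have := @zero_of_sub W _ _ Hs (Ordinal hb) (Ordinal ha); rewrite -gG /= => h0.
    by rewrite g_skew // h0 ?oppr0 //; lia.
  by split => //; apply/forallP; rewrite -unit_iff.
case=> hs hP hc.
have hu : W \in unitmx by rewrite unit_iff //; apply/forallP.
split; first by split.
split.
  move=> j jn; rewrite !flagE trmx_mul tr_pid_mx !mulmxA.
  apply/matrixP => a b; rewrite [RHS]mxE pidr -!mulmxA pidl !mulmxA -/(G W).
  case: ifP => // bq; case: ifP => // ap; rewrite -gG hP //; lia.
split.
  move=> j /andP [nj jM].
  apply: submx_trans (_ : (flagsp B (M - j) <= _)%MS).
    by case/andP: (perp_eq hu hP jM).
  rewrite !flagE.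
  have -> : (pid_mx (M - j) : 'M[R]_M) = (pid_mx (M - j) : 'M[R]_M) *m (pid_mx j : 'M[R]_M).
    by rewrite mul_pid_mx; congr pid_mx; lia.
  by rewrite -mulmxA submxMl.
by move=> j jn; apply: perp_eq => //; lia.
Qed.

Lemma orient_raw W (j : 'I_n) : W^T = -W -> Pat W ->
  induced_orientation B W j = (0 < we R (n - j) * \prod_(i < n - j) cN W (j + i)%N).
Proof.
move=> hs hP; have jn := ltn_ord j.
rewrite /induced_orientation wedge_eq.
- rewrite pmulrn_lgt0 ?wN_gt0 //; congr (0 < _ * _); apply: eq_bigr => i _.
  have iM := ltn_ord i.
  rewrite /cN /g (_ : (j + ((2 * (n - j)).-1 - i) = M.-1 - (j + i))%N) //; lia.
- move=> a b ha hb hab; apply: (hP (j + a)%N (j + b)%N); lia.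
- move=> a b ha hb; have h1 : (j + a < M)%N by lia. have h2 : (j + b < M)%N by lia. exact: (g_skew hs h1 h2).
Qed.

Definition S W (j : nat) := \prod_(i < n - j) Num.sg (cN W (j + i)%N).

Lemma orient_sg W (j : 'I_n) : W^T = -W -> Pat W -> (forall i : 'I_n, cN W i != 0) ->
  induced_orientation B W j = (0 < we R (n - j) * S W j).
Proof.
move=> hs hP hc; rewrite orient_raw //.
set P := \prod_(i < n - j) cN W (j + i)%N.
have PS : S W j = Num.sg P by rewrite /S /P (big_morph _ (@sgrM _) (sgr1 _)).
have P0 : P != 0.
  apply/prodf_neq0 => i _; have h : (j + i < n)%N by have := ltn_ord i; lia.
  exact: (hc (Ordinal h)).
by rewrite PS {1}(numEsg P) mulrA pmulr_lgt0 // normr_gt0.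
Qed.

Lemma sum_cont (T : topologicalType) (I : Type) (r : seq I) (P : pred I) (F : I -> T -> R) :
  (forall i, continuous (F i)) -> continuous (fun x => \sum_(i <- r | P i) F i x).
Proof.
move=> hF; elim: r => [|i r IH].
  have -> : (fun x => \sum_(i <- [::] | P i) F i x) = (fun=> 0).
    by apply: funext => x; rewrite big_nil.
  exact: cst_continuous.
have -> : (fun x => \sum_(j <- i :: r | P j) F j x) =
   (fun x => if P i then F i x + \sum_(j <- r | P j) F j x else \sum_(j <- r | P j) F j x).
  by apply: funext => x; rewrite big_cons.
case: (P i) => //; move=> x.
exact: (@continuousD _ _ _ (F i) (fun x => \sum_(j <- r | P j) F j x) x (hF i x) (IH x)).
Qed.

Lemma bil_cont (u v : 'rV[R]_M) : continuous (fun W : 'M[R]_M => (u *m W *m v^T) 0 0).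
Proof.
have -> : (fun W : 'M[R]_M => (u *m W *m v^T) 0 0) =
   (fun W => \sum_(l < M) \sum_(t < M) (u 0 t * v 0 l) * W t l).
  apply: funext => W; rewrite mxE; apply: eq_bigr => l _.
  rewrite [(u *m W) _ _]mxE big_distrl /=; apply: eq_bigr => t _.
  by rewrite !mxE mulrAC.
apply: sum_cont => l; apply: sum_cont => t; move=> W.
apply: (@continuousM _ _ (fun=> u 0 t * v 0 l) (fun W : 'M[R]_M => W t l)).
  exact: cst_continuous.
exact: coord_continuous.
Qed.

Lemma cN_cont a : continuous (fun W => cN W a).
Proof. exact: bil_cont. Qed.

Lemma seg_conn (W1 W2 : 'M[R]_M) :
  connected ((fun t : R => t *: W1 + (1 - t) *: W2) @` [set t : R | 0 <= t <= 1]).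
Proof.
apply: connected_continuous_connected.
  apply/connected_intervalP => x y /andP[x0 x1] /andP[y0 y1] z /andP[xz zy].
  by apply/andP; split; [exact: le_trans x0 xz|exact: le_trans zy y1].
apply: continuous_subspaceT => t.
apply: (@continuousD _ _ _ (fun t : R => t *: W1) (fun t : R => (1 - t) *: W2)).
  by apply: (@continuousZr_tmp _ _ _ (fun t : R => t) W1); exact: cvg_id.
apply: (@continuousZr_tmp _ _ _ (fun t : R => 1 - t) W2).
apply: (@continuousB _ R^o _ (fun=> 1) (fun t : R => t)); [exact: cst_continuous|exact: cvg_id].
Qed.

Lemma conv_sg (x y t : R) : x != 0 -> Num.sg x = Num.sg y -> 0 <= t <= 1 ->
  Num.sg (t * x + (1 - t) * y) = Num.sg x.
Proof.
move=> x0 e /andP [t0 t1].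
case: (ltgtP x 0) => [xl|xg|xe]; last by rewrite xe eqxx in x0.
  case: (ltgtP y 0) => [yl|yg|ye].
  - rewrite !ltr0_sg //; nra.
  - by move: e; rewrite (ltr0_sg xl) (gtr0_sg yg) => e; exfalso; lra.
  - by move: e; rewrite (ltr0_sg xl) ye sgr0 => e; exfalso; lra.
case: (ltgtP y 0) => [yl|yg|ye].
- by move: e; rewrite (gtr0_sg xg) (ltr0_sg yl) => e; exfalso; lra.
- rewrite !gtr0_sg //; nra.
- by move: e; rewrite (gtr0_sg xg) ye sgr0 => e; exfalso; lra.
Qed.

Definition sgs W1 W2 := forall i : 'I_n, Num.sg (cN W1 i) = Num.sg (cN W2 i).

Lemma conv_in W1 W2 t : Omega B W1 -> Omega B W2 -> sgs W1 W2 -> 0 <= t <= 1 ->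
  Omega B (t *: W1 + (1 - t) *: W2) /\ sgs (t *: W1 + (1 - t) *: W2) W1.
Proof.
move=> /OmegaE [hs1 hP1 hc1] /OmegaE [hs2 hP2 hc2] hsg ht.
have hsgt : sgs (t *: W1 + (1 - t) *: W2) W1.
  move=> i; rewrite /cN g_lin; apply: conv_sg => //; [exact: hc1|exact: hsg].
split => //; apply/OmegaE; split.
- by rewrite linearD !linearZ /= hs1 hs2 !scalerN opprD.
- by move=> a b ha hb hab; rewrite g_lin hP1 ?hP2 // !mulr0 addr0.
- by move=> i; rewrite -sgr_eq0 hsgt sgr_eq0 hc1.
Qed.

Lemma comp_iff W1 W2 : Omega B W1 -> Omega B W2 ->
  connected_component (Omega B) W1 W2 <-> sgs W1 W2.
Proof.
move=> h1 h2; split.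
- case=> C [CW1 CO Cc] CW2 i.
  have hi : is_interval ((fun W => cN W i) @` C).
    apply/connected_intervalP; apply: connected_continuous_connected => //.
    apply: continuous_subspaceT; exact: cN_cont.
  have nz : forall W, C W -> cN W i != 0.
    by move=> W /CO /OmegaE [_ _]; apply.
  have z0 : ~ ((fun W => cN W i) @` C) 0.
    by case=> W CW e; move: (nz W CW); rewrite e eqxx.
  have n1 := nz _ CW1; have n2 := nz _ CW2.
  case: (ltgtP (cN W1 i) 0) => [l1|g1|e1]; last by rewrite e1 eqxx in n1.
    case: (ltgtP (cN W2 i) 0) => [l2|g2|e2]; last by rewrite e2 eqxx in n2.
      by rewrite !ltr0_sg.
    exfalso; apply: z0; apply: (hi (cN W1 i) (cN W2 i)).
    + by exists W1.
    + by exists W2.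
    + by rewrite (ltW l1) (ltW g2).
  case: (ltgtP (cN W2 i) 0) => [l2|g2|e2]; last by rewrite e2 eqxx in n2.
    exfalso; apply: z0; apply: (hi (cN W2 i) (cN W1 i)).
    + by exists W2.
    + by exists W1.
    + by rewrite (ltW l2) (ltW g1).
  by rewrite !gtr0_sg.
- move=> hsg; exists ((fun t : R => t *: W1 + (1 - t) *: W2) @` [set t : R | 0 <= t <= 1]).
    split.
    + exists 1; first by rewrite /= ler01 lexx.
      by rewrite scale1r subrr scale0r addr0.
    + by move=> _ [t ht <-]; have [] := conv_in h1 h2 hsg ht.
    + exact: seg_conn.
  exists 0; first by rewrite /= lexx ler01.
  by rewrite scale0r add0r subr0 scale1r.
Qed.

Lemma S_pm1 W j : (forall i : 'I_n, cN W i != 0) -> pm1 (S W j).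
Proof.
move=> hc; apply: pm1_prod => i _; apply: pm1_sg.
have h : (j + i < n)%N by have := ltn_ord i; lia.
exact: (hc (Ordinal h)).
Qed.

Lemma S_rec W (i : 'I_n) : (forall i : 'I_n, cN W i != 0) ->
  Num.sg (cN W i) = S W i * S W i.+1.
Proof.
move=> hc; have := ltn_ord i => hi.
rewrite {1}/S (_ : (n - i = (n - i.+1).+1)%N); last by lia.
rewrite big_ord_recl /= addn0 -mulrA.
rewrite (eq_bigr (fun k : 'I_(n - i.+1) => Num.sg (cN W (i.+1 + k)%N))); last first.
  by move=> k _; congr (Num.sg (cN W _)); rewrite /= /bump /=; lia.
by rewrite -/(S W i.+1) pm1_sq ?mulr1 //; apply: S_pm1.
Qed.

Lemma orient_iff W1 W2 : Omega B W1 -> Omega B W2 ->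
  (forall j : 'I_n, induced_orientation B W1 j = induced_orientation B W2 j) <-> sgs W1 W2.
Proof.
move=> /OmegaE [hs1 hP1 hc1] /OmegaE [hs2 hP2 hc2]; split => [ho|hsg j].
- have hS : forall j, (j <= n)%N -> S W1 j = S W2 j.
    move=> j; rewrite leq_eqVlt => /orP [/eqP ->|jn].
      by rewrite /S subnn !big_ord0.
    have := ho (Ordinal jn); rewrite !orient_sg //= => e.
    have ep := we_pm R (n - j).
    apply: (mulfI (pm1_neq0 ep)); apply: pm1_pos => //; apply: pm1M => //; exact: S_pm1.
  move=> i; have := ltn_ord i => hi.
  by rewrite !S_rec // !hS //; lia.
- rewrite !orient_sg //; congr (0 < _ * _); apply: eq_bigr => i _.
  have h : (j + i < n)%N by have := ltn_ord i; lia.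
  exact: (hsg (Ordinal h)).
Qed.

Lemma exists_W (o : 'I_n -> bool) : exists W, Omega B W /\
  forall j : 'I_n, induced_orientation B W j = o j.
Proof.
pose tau (j : nat) : R :=
  oapp (fun jj : 'I_n => if o jj == (0 < we R (n - jj)) then 1 else -1) 1 (insub j).
have tpm : forall j, pm1 (tau j).
  move=> j; rewrite /tau; case: insubP => [jj _ _|_] /=; last by left.
  by case: ifP => _; [left|right].
pose d (a : nat) := tau a * tau a.+1.
have dpm : forall a, pm1 (d a) by move=> a; apply: pm1M.
pose M0 : 'M[R]_M := \matrix_(x, y)
  (if (x + y == M.-1)%N then (if (x < n)%N then d x else - d y) else 0).
pose W := invmx B *m M0 *m invmx B^T.
have GW : G W = M0.
  rewrite /G /W !mulmxA mulmxV // mul1mx -mulmxA mulVmx ?unitmx_tr //.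
  by rewrite mulmx1.
have gW : forall a b (ha : (a < M)%N) (hb : (b < M)%N), g W a b =
    if (a + b == M.-1)%N then (if (a < n)%N then d a else - d b) else 0.
  by move=> a b ha hb; rewrite (gG W (Ordinal ha) (Ordinal hb)) GW mxE.
have M0T : M0^T = - M0.
  apply/matrixP => x y; rewrite !mxE addnC; case: eqP => e; last by rewrite oppr0.
  case: (ltnP x n) => xn; case: (ltnP y n) => yn //=; try by rewrite ?opprK.
    by exfalso; lia.
  by exfalso; have := ltn_ord x; have := ltn_ord y; lia.
have hs : W^T = - W.
  by rewrite /W !trmx_mul !trmx_inv trmxK M0T mulNmx mulmxN mulmxA.
have hP : Pat W.
  move=> a b ha hb hab; rewrite gW //; case: eqP => // e; exfalso; lia.
have hcd : forall i : 'I_n, cN W i = d i.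
  move=> i; have hi := ltn_ord i.
  have h1 : (i < M)%N by lia.
  have h2 : (M.-1 - i < M)%N by lia.
  rewrite /cN gW // (_ : (i + (M.-1 - i) == M.-1)%N); last by apply/eqP; lia.
  by rewrite hi.
have hc : forall i : 'I_n, cN W i != 0 by move=> i; rewrite hcd; apply: pm1_neq0.
have hO : Omega B W by apply/OmegaE.
exists W; split => // j.
have tele : forall k, (k <= n)%N -> \prod_(i < k) d (n - k + i)%N = tau (n - k)%N.
  elim=> [|k IH] kn.
    by rewrite big_ord0 subn0 /tau insubF ?ltnn.
  rewrite big_ord_recl /= addn0.
  rewrite (eq_bigr (fun i : 'I_k => d (n - k + i)%N)); last first.
    by move=> i _; congr d; rewrite /= /bump /=; lia.
  rewrite IH; last by lia.
  rewrite /d -mulrA (_ : (n - k.+1).+1 = n - k)%N; last by lia.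
  by rewrite pm1_sq ?mulr1.
have hj := ltn_ord j.
rewrite orient_raw //.
rewrite (eq_bigr (fun i : 'I_(n - j) => d (n - (n - j) + i)%N)); last first.
  move=> i _; have h : (j + i < n)%N by have := ltn_ord i; lia.
  rewrite (_ : (n - (n - j) + i = j + i)%N); last by lia.
  exact: (hcd (Ordinal h)).
rewrite tele ?leq_subr // (_ : (n - (n - j) = j)%N); last by lia.
rewrite /tau; case: insubP => [jj _ /val_inj ->|]; last by rewrite hj.
have h : (0 < (-1 : R)) = false by rewrite oppr_gt0 ltr10.
rewrite /=; case: (we_pm R (n - j)) => ->; case: (o j);
  by rewrite ?h ?ltr01 /= ?mulr1 ?mulrN1 ?opprK ?h ?ltr01.
Qed.

End LA.

Theorem lemma3p9 (R : realType) (n : nat) (B : 'M[R]_(2 * n)) (hB : B \in unitmx) :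
  (* two forms lie in the same connected component iff they induce the same orientations *)
  (forall W1 W2, Omega B W1 -> Omega B W2 ->
     (connected_component (Omega B : set 'M[R]_(2 * n)) W1 W2 <->
      forall j : 'I_n, induced_orientation B W1 j = induced_orientation B W2 j))
  (* every n-tuple of orientations occurs *)
  /\ (forall o : 'I_n -> bool, exists W, Omega B W /\
        forall j : 'I_n, induced_orientation B W j = o j)
  (* each connected component is convex *)
  /\ (forall W, Omega B W ->
        convex_set (connected_component (Omega B : set 'M[R]_(2 * n)) W : set (convex_lmodType 'M[R]_(2 * n)))).
Proof.
split.
  move=> W1 W2 h1 h2; rewrite (comp_iff hB h1 h2).
  by split => h; [apply/(orient_iff hB h1 h2)|apply/(orient_iff hB h1 h2)].
split; first by move=> o; exact: exists_W.
move=> W hW x y l; rewrite !in_setE => hx hy.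
have hx' := connected_component_sub hx.
have hy' := connected_component_sub hy.
have sx := (comp_iff hB hW hx').1 hx.
have sy := (comp_iff hB hW hy').1 hy.
have hxy : sgs B x y by move=> i; rewrite -sx -sy.
have hl : 0 <= l%:num <= 1 by rewrite ge0 le1.
have [hO hsg] := conv_in hB hx' hy' hxy hl.
have -> : conv l x y = l%:num *: x + (1 - l%:num) *: y by [].
apply/(comp_iff hB hW hO) => i; by rewrite sx hsg.
Qed.
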